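(* Let $\mathcal{C}$ be either $\mathbf{PsTop}$ (pseudotopological spaces) or $\mathbf{Lim}$ (limit spaces). Let $\mathrm{cof}$ be the class of morphisms $i : B \to A$ of $\mathcal{C}$ with the homotopy extension property with respect to the cylinder $IX = X \times [0,1]$, and let $\mathrm{we}$ be the class of homotopy equivalences with respect to this cylinder. Then $(\mathcal{C}, \mathrm{cof}, \mathrm{we})$ is a cofibration category.
   Context: Convergence spaces: a set $X$ with a relation between filters on $X$ and points (written $\lambda \to x$) such that $\lambda \to x$, $\lambda\subseteq\lambda'$ imply $\lambda'\to x$, and the principal ultrafilter $\dot x \to x$. Limit space: additionally $\lambda\to x$, $\lambda'\to x$ imply $\lambda\cap\lambda'\to x$. Pseudotopological space: $\lambda \to x$ iff every ultrafilter containing $\lambda$ converges to $x$. Continuous maps: $\lambda\to x$ implies $f(\lambda)\to f(x)$. $[0,1]$ carries its topological convergence; products and pushouts are initial/final structures in $\mathcal{C}$. Cylinder: $IX = X\times[0,1]$, $i_k(x) = (x,k)$, $p$ the projection. Homotopy extension property of $i : B \to A$: for $k=0,1$, for all $Y$, $f : A \to Y$, $G : IB \to Y$ with $f i = G i_k$, there is $H : IA \to Y$ with $H i_k = f$ and $H \circ Ii = G$. Maps $f,g : X \to Y$ are homotopic if there is $H : IX \to Y$ with $H i_0 = f$, $H i_1 = g$; $f : X\to Y$ is a homotopy equivalence if there is $g : Y \to X$ with $fg$ homotopic to $1_Y$ and $gf$ homotopic to $1_X$. A cofibration category (Baues) is a category with classes $\mathrm{cof}$, $\mathrm{we}$ satisfying: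 (1) isomorphisms are in both classes; 2-out-of-3 for weak equivalences; cofibrations closed under composition; (2) for a cofibration $i : B \to A$ and any $f : B \to Y$ the pushout exists, $\bar i : Y \to A\cup_B Y$ is a cofibration, if $f$ is a weak equivalence so is $\bar f : A \to A \cup_B Y$, and if $i$ is a weak equivalence so is $\bar i$; (3) every map factors as a cofibration followed by a weak equivalence; (4) every object $X$ admits a cofibration $X \to RX$ which is a weak equivalence with $RX$ fibrant, i.e. every cofibration $RX \to Q$ which is a weak equivalence admits a retraction $Q \to RX$. *)

(* Defs.v *)
From Stdlib Require Import Reals.
Set Implicit Arguments.
Unset Strict Implicit.
Open Scope R_scope.

Definition is_filter {X : Type} (F : (X -> Prop) -> Prop) : Prop :=
  F (fun _ => True) /\ ~ F (fun _ => False) /\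
  (forall A B : X -> Prop, F A -> (forall x, A x -> B x) -> F B) /\
  (forall A B : X -> Prop, F A -> F B -> F (fun x => A x /\ B x)).

Definition filter_sub {X : Type} (F G : (X -> Prop) -> Prop) : Prop :=
  forall A, F A -> G A.

Definition principal {X : Type} (x : X) : (X -> Prop) -> Prop := fun A => A x.

Definition is_ultrafilter {X : Type} (U : (X -> Prop) -> Prop) : Prop :=
  is_filter U /\ forall G, is_filter G -> filter_sub U G -> filter_sub G U.

Definition img {X Y : Type} (f : X -> Y) (F : (X -> Prop) -> Prop) : (Y -> Prop) -> Prop :=
  fun B => F (fun x => B (f x)).

Definition filter_cap {X : Type} (F G : (X -> Prop) -> Prop) : (X -> Prop) -> Prop :=
  fun A => F A /\ G A.

Record ConvSpace := {
  carrier :> Type;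
  conv : ((carrier -> Prop) -> Prop) -> carrier -> Prop }.

Arguments conv {c} F x.

Definition is_convergence (X : ConvSpace) : Prop :=
  (forall F (x : X), conv F x -> is_filter F) /\
  (forall F G (x : X), conv F x -> is_filter G -> filter_sub F G -> conv G x) /\
  (forall x : X, conv (principal x) x).

Definition is_Lim (X : ConvSpace) : Prop :=
  is_convergence X /\
  (forall F G (x : X), conv F x -> conv G x -> conv (filter_cap F G) x).

Definition is_PsTop (X : ConvSpace) : Prop :=
  is_convergence X /\
  (forall F (x : X), is_filter F ->
     (conv F x <-> forall U, is_ultrafilter U -> filter_sub F U -> conv U x)).

Definition continuous {X Y : ConvSpace} (f : X -> Y) : Prop :=
  forall F (x : X), conv F x -> conv (img f F) (f x).

Definition I01 : Type := { t : R | 0 <= t <= 1 }.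

Definition I01_conv (F : (I01 -> Prop) -> Prop) (t : I01) : Prop :=
  is_filter F /\
  forall eps : R, 0 < eps ->
    F (fun s : I01 => Rabs (proj1_sig s - proj1_sig t) < eps).

Definition I01_space : ConvSpace := {| carrier := I01; conv := I01_conv |}.

Lemma I0_proof : 0 <= 0 <= 1. Proof. split; [apply Rle_refl | apply Rle_0_1]. Qed.
Lemma I1_proof : 0 <= 1 <= 1. Proof. split; [apply Rle_0_1 | apply Rle_refl]. Qed.
Definition I0 : I01 := exist _ 0 I0_proof.
Definition I1 : I01 := exist _ 1 I1_proof.

(** * Cylinder IX = X x [0,1] (product = initial structure w.r.t. projections) *)
Definition cyl_conv (X : ConvSpace) (F : ((X * I01)%type -> Prop) -> Prop)
    (p : (X * I01)%type) : Prop :=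
  is_filter F /\ conv (img fst F) (fst p) /\ I01_conv (img snd F) (snd p).

Definition Cyl (X : ConvSpace) : ConvSpace :=
  {| carrier := (X * I01)%type; conv := @cyl_conv X |}.

Definition incl {X : ConvSpace} (k : I01) : X -> Cyl X := fun x => (x, k).
Definition Icyl {X Y : ConvSpace} (f : X -> Y) : Cyl X -> Cyl Y :=
  fun p => (f (fst p), snd p).

Definition HEP_at (P : ConvSpace -> Prop) (k : I01) {B A : ConvSpace} (i : B -> A) : Prop :=
  forall (Y : ConvSpace), P Y ->
  forall (f : A -> Y) (G : Cyl B -> Y), continuous f -> continuous G ->
    (forall b : B, f (i b) = G (incl k b)) ->
    exists H : Cyl A -> Y, continuous H /\
      (forall a : A, H (incl k a) = f a) /\
      (forall p : Cyl B, H (Icyl i p) = G p).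

Definition HEP (P : ConvSpace -> Prop) {B A : ConvSpace} (i : B -> A) : Prop :=
  HEP_at P I0 i /\ HEP_at P I1 i.

Definition homotopic {X Y : ConvSpace} (f g : X -> Y) : Prop :=
  exists H : Cyl X -> Y, continuous H /\
    (forall x : X, H (incl I0 x) = f x) /\ (forall x : X, H (incl I1 x) = g x).

Definition homotopy_equivalence {X Y : ConvSpace} (f : X -> Y) : Prop :=
  exists g : Y -> X, continuous g /\
    homotopic (fun y => f (g y)) (fun y => y) /\
    homotopic (fun x => g (f x)) (fun x => x).

Definition cof (P : ConvSpace -> Prop) {B A : ConvSpace} (i : B -> A) : Prop :=
  continuous i /\ HEP P i.

Definition we {X Y : ConvSpace} (f : X -> Y) : Prop :=
  continuous f /\ homotopy_equivalence f.

Definition is_iso {X Y : ConvSpace} (f : X -> Y) : Prop :=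
  continuous f /\ exists g : Y -> X, continuous g /\
    (forall x, g (f x) = x) /\ (forall y, f (g y) = y).

Definition is_pushout (P : ConvSpace -> Prop) {B A Y Q : ConvSpace}
    (i : B -> A) (f : B -> Y) (fbar : A -> Q) (ibar : Y -> Q) : Prop :=
  P Q /\ continuous fbar /\ continuous ibar /\
  (forall b : B, fbar (i b) = ibar (f b)) /\
  forall (Z : ConvSpace), P Z -> forall (u : A -> Z) (v : Y -> Z),
    continuous u -> continuous v -> (forall b : B, u (i b) = v (f b)) ->
    exists h : Q -> Z, continuous h /\
      (forall a, h (fbar a) = u a) /\ (forall y, h (ibar y) = v y) /\
      (forall h' : Q -> Z, continuous h' ->
         (forall a, h' (fbar a) = u a) -> (forall y, h' (ibar y) = v y) ->
         forall q, h' q = h q).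

Definition fibrant (P : ConvSpace -> Prop) (R : ConvSpace) : Prop :=
  forall (Q : ConvSpace), P Q -> forall k : R -> Q, cof P k -> we k ->
    exists r : Q -> R, continuous r /\ forall x : R, r (k x) = x.

(** * Baues' axioms of a cofibration category, for the full subcategory of
    convergence spaces satisfying [P], with cof = [cof P] and we = [we]. *)
Definition cofibration_category (P : ConvSpace -> Prop) : Prop :=
  (forall X Y : ConvSpace, P X -> P Y -> forall f : X -> Y,
     is_iso f -> cof P f /\ we f) /\
  (forall X Y Z : ConvSpace, P X -> P Y -> P Z ->
   forall (f : X -> Y) (g : Y -> Z), continuous f -> continuous g ->
     (we f -> we g -> we (fun x => g (f x))) /\
     (we f -> we (fun x => g (f x)) -> we g) /\
     (we g -> we (fun x => g (f x)) -> we f)) /\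
  (forall X Y Z : ConvSpace, P X -> P Y -> P Z ->
   forall (f : X -> Y) (g : Y -> Z), cof P f -> cof P g -> cof P (fun x => g (f x))) /\
  (forall B A Y : ConvSpace, P B -> P A -> P Y ->
   forall (i : B -> A) (f : B -> Y), cof P i -> continuous f ->
     (exists (Q : ConvSpace) (fbar : A -> Q) (ibar : Y -> Q),
        is_pushout P i f fbar ibar) /\
     (forall (Q : ConvSpace) (fbar : A -> Q) (ibar : Y -> Q),
        is_pushout P i f fbar ibar ->
        cof P ibar /\ (we f -> we fbar) /\ (we i -> we ibar))) /\
  (forall X Y : ConvSpace, P X -> P Y -> forall f : X -> Y, continuous f ->
     exists (Z : ConvSpace) (i : X -> Z) (p : Z -> Y),
       P Z /\ cof P i /\ we p /\ forall x, p (i x) = f x) /\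
  (forall X : ConvSpace, P X ->
     exists (RX : ConvSpace) (j : X -> RX),
       P RX /\ cof P j /\ we j /\ fibrant P RX).

(* Main.v *)
Require Import Defs.
From Stdlib Require Import Reals Lra Classical FunctionalExtensionality PropExtensionality ProofIrrelevance ClassicalEpsilon.
From mathcomp Require classical_sets filter.
Open Scope R_scope.

Lemma ultra_exists {X : Type} (F : (X -> Prop) -> Prop) :
  is_filter F -> exists U, is_ultrafilter U /\ filter_sub F U.
Proof.
  intros [HT [HF [HS HI]]].
  assert (PF : filter.ProperFilter F).
  { constructor. exact HF. constructor. exact HT. intros A B; apply HI.
    intros A B H H0; eapply HS; [exact H0|]; exact H. }
  destruct (filter.ultraFilterLemma PF) as [G [UG sub]].
  exists G. destruct UG as [PG maxG]. destruct PG as [ne [gT gI gS]].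
  split; [split; [split; [exact gT| split; [exact ne| split]]|]|].
  - intros A B H1 H2; eapply gS; [|exact H1]; exact H2.
  - intros A B; apply gI.
  - intros G' [T' [N' [S' I']]] sub'.
    assert (PG' : filter.ProperFilter G').
    { constructor. exact N'. constructor. exact T'. intros A B; apply I'.
      intros A B H H0; eapply S'; [exact H0|]; exact H. }
    pose proof (maxG G' PG' sub') as E. rewrite E. intros A H; exact H.
  - exact sub.
Qed.

Lemma fS {X} (F : (X -> Prop) -> Prop) A B : is_filter F -> F A -> (forall x, A x -> B x) -> F B.
Proof. intros [_ [_ [H _]]]; apply H. Qed.
Lemma fI {X} (F : (X -> Prop) -> Prop) A B : is_filter F -> F A -> F B -> F (fun x => A x /\ B x).
Proof. intros [_ [_ [_ H]]]; apply H. Qed.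
Lemma fT {X} (F : (X -> Prop) -> Prop) : is_filter F -> F (fun _ => True).
Proof. intros [H _]; exact H. Qed.
Lemma fN {X} (F : (X -> Prop) -> Prop) A : is_filter F -> F A -> (forall x, ~ A x) -> False.
Proof. intros HF HA HN. destruct HF as [_ [H [HS _]]]. apply H. apply (HS A); [exact HA|].
  intros x Ax; exact (HN x Ax). Qed.

Lemma filter_img {X Y} (f : X -> Y) F : is_filter F -> is_filter (img f F).
Proof.
  intros HF. unfold img. split; [|split; [|split]].
  - apply fT; auto.
  - intro H. destruct HF as [_ [N _]]. exact (N H).
  - intros A B HA HB. eapply fS; eauto.
  - intros A B HA HB. apply (fI F _ _ HF HA HB).
Qed.

Lemma filter_cap_is {X} (F G : (X -> Prop) -> Prop) : is_filter F -> is_filter G -> is_filter (filter_cap F G).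
Proof.
  intros HF HG. unfold filter_cap. split; [|split; [|split]].
  - split; apply fT; auto.
  - intros [H _]. destruct HF as [_ [N _]]. exact (N H).
  - intros A B [H1 H2] HB. split; eapply fS; eauto.
  - intros A B [H1 H2] [H3 H4]. split; apply fI; auto.
Qed.

Lemma filter_principal {X} (x : X) : is_filter (principal x).
Proof. unfold principal. split; [|split; [|split]]; auto. Qed.

Definition fprod {A B} (G : (A -> Prop) -> Prop) (N : (B -> Prop) -> Prop) : ((A * B) -> Prop) -> Prop :=
  fun E => exists S T, G S /\ N T /\ forall a b, S a -> T b -> E (a, b).

Lemma filter_fprod {A B} G N : is_filter G -> is_filter N -> is_filter (@fprod A B G N).
Proof.
  intros HG HN. unfold fprod. split; [|split; [|split]].
  - exists (fun _ => True), (fun _ => True). split; [apply fT|split; [apply fT|]]; auto.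
  - intros [S [T [HS [HT H]]]]. apply (fN G S HG HS). intros a Sa.
    apply (fN N T HN HT). intros b Tb. exact (H a b Sa Tb).
  - intros E E' [S [T [HS [HT H]]]] HE. exists S, T. split; [|split]; auto.
  - intros E E' [S [T [HS [HT H]]]] [S' [T' [HS' [HT' H']]]].
    exists (fun a => S a /\ S' a), (fun b => T b /\ T' b).
    split; [apply fI|split; [apply fI|]]; auto. intros a b [] []; split; auto.
Qed.

Definition fjoin {X} (F : (X -> Prop) -> Prop) (C : X -> Prop) : (X -> Prop) -> Prop :=
  fun S => F (fun x => C x -> S x).

Lemma filter_fjoin {X} (F : (X -> Prop) -> Prop) C : is_filter F -> ~ F (fun x => ~ C x) -> is_filter (fjoin F C).
Proof.
  intros HF HC. unfold fjoin. split; [|split; [|split]].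
  - apply (fS F (fun _ => True)); [exact HF|apply fT; exact HF|auto].
  - intro H. apply HC. eapply fS; [exact HF|exact H|]. intros x Hx Cx; exact (Hx Cx).
  - intros A B HA HB. eapply fS; [exact HF|exact HA|]. intros x Hx Cx; auto.
  - intros A B HA HB. eapply fS; [exact HF|exact (fI F _ _ HF HA HB)|]. intros x [H1 H2] Cx; auto.
Qed.

Lemma fjoin_sub {X} (F : (X -> Prop) -> Prop) C : is_filter F -> filter_sub F (fjoin F C).
Proof. intros HF A HA. unfold fjoin. eapply fS; eauto. Qed.

Lemma ultra_prime {X} (U : (X -> Prop) -> Prop) S : is_ultrafilter U -> U S \/ U (fun x => ~ S x).
Proof.
  intros [HU Hmax]. destruct (classic (U (fun x => ~ S x))) as [H|H]; [right; exact H|left].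
  apply (Hmax (fjoin U S) (filter_fjoin U S HU H) (fjoin_sub U S HU)).
  unfold fjoin. apply fS with (A := fun _ => True); auto. apply fT; auto.
Qed.

Lemma ultra_img {X Y} (f : X -> Y) U : is_ultrafilter U -> is_ultrafilter (img f U).
Proof.
  intros HU. split. apply filter_img, HU.
  intros G HG sub T GT. unfold img.
  destruct (ultra_prime U (fun x => T (f x)) HU) as [H|H]; auto.
  exfalso. assert (G (fun y => ~ T y)) by (apply sub; exact H).
  apply (fN G (fun y => T y /\ ~ T y) HG). apply fI; auto. intros x [a b]; auto.
Qed.

Lemma PsTop_Lim X : is_PsTop X -> is_Lim X.
Proof.
  intros [HC HP]. split; auto. intros F G x HF HG.
  destruct HC as [Hf [Hup Hpr]].
  assert (FF : is_filter F) by (eapply Hf; eauto).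
  assert (FG : is_filter G) by (eapply Hf; eauto).
  apply (HP _ x (filter_cap_is F G FF FG)). intros U HU sub.
  destruct (classic (filter_sub F U)) as [H1|H1].
  - eapply (proj1 (HP F x FF)); eauto.
  - destruct (classic (filter_sub G U)) as [H2|H2].
    + eapply (proj1 (HP G x FG)); eauto.
    + exfalso. apply not_all_ex_not in H1. destruct H1 as [A HA].
      apply not_all_ex_not in H2. destruct H2 as [B HB].
      apply imply_to_and in HA. apply imply_to_and in HB.
      destruct HA as [FA NA]. destruct HB as [GB NB].
      assert (UAB : U (fun x => A x \/ B x)).
      { apply sub. split; eapply fS; eauto. }
      destruct (ultra_prime U A HU) as [|UA]; [contradiction|].
      destruct (ultra_prime U B HU) as [|UB]; [contradiction|].
      apply (fN U _ (proj1 HU) (fI U _ _ (proj1 HU) UAB (fI U _ _ (proj1 HU) UA UB))).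
      intros z [Hab [Hna Hnb]]; tauto.
Qed.

Definition filt (D : ConvSpace) := forall F (p : D), conv F p -> is_filter F.
Definition upw (D : ConvSpace) := forall F G (p : D), conv F p -> is_filter G -> filter_sub F G -> conv G p.
Definition icont {D : ConvSpace} (v : D -> I01) := forall F p, conv F p -> I01_conv (img v F) (v p).
Definition rcont {D : ConvSpace} (a : D -> R) :=
  forall F p, conv F p -> forall e, 0 < e -> F (fun x => Rabs (a x - a p) < e).

Definition val (t : I01) : R := proj1_sig t.
Lemma val_bnd (t : I01) : 0 <= val t <= 1. Proof. exact (proj2_sig t). Qed.
Lemma I01_ext (s t : I01) : val s = val t -> s = t.
Proof. destruct s as [s Hs], t as [t Ht]; unfold val; simpl; intros ->. f_equal; apply proof_irrelevance. Qed.

Lemma mkI_proof (r : R) : 0 <= Rmax 0 (Rmin 1 r) <= 1.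
Proof. unfold Rmax, Rmin; repeat destruct Rle_dec; lra. Qed.
Definition mkI (r : R) : I01 := exist _ (Rmax 0 (Rmin 1 r)) (mkI_proof r).
Lemma mkI_val r : 0 <= r <= 1 -> val (mkI r) = r.
Proof. intros H; unfold val, mkI; simpl; unfold Rmax, Rmin; repeat destruct Rle_dec; lra. Qed.
Lemma mkI_lip r r' : Rabs (val (mkI r) - val (mkI r')) <= Rabs (r - r').
Proof. unfold val, mkI; simpl; unfold Rmax, Rmin; repeat destruct Rle_dec;
  unfold Rabs; repeat destruct Rcase_abs; lra. Qed.
Lemma mkI_eq r (t : I01) : val t = r -> mkI r = t.
Proof. intros H; apply I01_ext; rewrite mkI_val; [auto|subst; apply val_bnd]. Qed.
Lemma I0_val : val I0 = 0. Proof. reflexivity. Qed.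
Lemma I1_val : val I1 = 1. Proof. reflexivity. Qed.

Lemma I01_up N N' t : I01_conv N t -> is_filter N' -> filter_sub N N' -> I01_conv N' t.
Proof. intros [_ H] HN sub; split; auto. Qed.

Lemma cyl_filt X : filt (Cyl X). Proof. intros F p [H _]; exact H. Qed.
Lemma cyl_upw X : is_convergence X -> upw (Cyl X).
Proof.
  intros [_ [Hup _]] F G p [HF [H1 H2]] HG sub. split; auto. split.
  - eapply Hup; eauto. apply filter_img; auto. intros A HA; apply sub, HA.
  - eapply I01_up; eauto. apply filter_img; auto. intros A HA; apply sub, HA.
Qed.
Lemma cyl_convergence X : is_convergence X -> is_convergence (Cyl X).
Proof.
  intros HX. split; [apply cyl_filt|split; [apply cyl_upw; auto|]].
  intros [x t]. split; [apply filter_principal|split].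
  - apply HX.
  - split. apply filter_img, filter_principal. intros e He. unfold img, principal; simpl.
    rewrite Rminus_diag, Rabs_R0; auto.
Qed.

Lemma cont_comp {X Y Z : ConvSpace} (f : X -> Y) (g : Y -> Z) :
  continuous f -> continuous g -> continuous (fun x => g (f x)).
Proof. intros Hf Hg F x H. exact (Hg _ _ (Hf _ _ H)). Qed.

Lemma cont_id {X : ConvSpace} : continuous (fun x : X => x).
Proof. intros F x H; exact H. Qed.

Lemma cont_fst (X : ConvSpace) : @continuous (Cyl X) X fst.
Proof. intros F p [_ [H _]]; exact H. Qed.
Lemma icont_snd (X : ConvSpace) : @icont (Cyl X) snd.
Proof. intros F p [_ [_ H]]; exact H. Qed.

Lemma pair_cont {D X : ConvSpace} (u : D -> X) (v : D -> I01) :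
  filt D -> continuous u -> icont v -> @continuous D (Cyl X) (fun p => (u p, v p)).
Proof.
  intros HD Hu Hv F p H. split; [apply filter_img; eapply HD; eauto|split].
  - exact (Hu _ _ H).
  - exact (Hv _ _ H).
Qed.

Lemma icont_comp {D D' : ConvSpace} (w : D -> D') (v : D' -> I01) :
  continuous w -> icont v -> icont (fun p => v (w p)).
Proof. intros Hw Hv F p H. exact (Hv _ _ (Hw _ _ H)). Qed.

Lemma icont_const {D : ConvSpace} (k : I01) : filt D -> @icont D (fun _ => k).
Proof.
  intros HD F p H. split. apply filter_img; eapply HD; eauto.
  intros e He. unfold img. apply (fS F (fun _ => True)); [eapply HD; eauto|apply fT; eapply HD; eauto|].
  intros; rewrite Rminus_diag, Rabs_R0; auto.
Qed.

Lemma rcont_val {D : ConvSpace} (v : D -> I01) : icont v -> rcont (fun p => val (v p)).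
Proof. intros Hv F p H e He. exact (proj2 (Hv _ _ H) e He). Qed.

Lemma icont_mkI {D : ConvSpace} (a : D -> R) : filt D -> rcont a -> icont (fun p => mkI (a p)).
Proof.
  intros HD Ha F p H. split. apply filter_img; eapply HD; eauto.
  intros e He. unfold img. eapply fS; [eapply HD; eauto|exact (Ha _ _ H e He)|].
  intros x Hx. pose proof (mkI_lip (a x) (a p)). fold (val (mkI (a x))). fold (val (mkI (a p))). lra.
Qed.

Definition lip2 (phi : R -> R -> R) (C : R) :=
  0 < C /\ forall a b a' b', 0 <= a <= 1 -> 0 <= b <= 1 -> 0 <= a' <= 1 -> 0 <= b' <= 1 ->
    Rabs (phi a' b' - phi a b) <= C * (Rabs (a' - a) + Rabs (b' - b)).

Lemma rcont_lip2 {D : ConvSpace} (v1 v2 : D -> I01) phi C :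
  filt D -> icont v1 -> icont v2 -> lip2 phi C ->
  rcont (fun p => phi (val (v1 p)) (val (v2 p))).
Proof.
  intros HD H1 H2 [HC Hl] F p H e He.
  set (d := e / (2 * C)).
  assert (Hd : 0 < d) by (unfold d; apply Rdiv_lt_0_compat; lra).
  pose proof (rcont_val v1 H1 F p H d Hd) as A1.
  pose proof (rcont_val v2 H2 F p H d Hd) as A2.
  eapply fS; [eapply HD; eauto|exact (fI F _ _ (HD _ _ H) A1 A2)|].
  intros x [B1 B2].
  pose proof (Hl (val (v1 p)) (val (v2 p)) (val (v1 x)) (val (v2 x)) (val_bnd _) (val_bnd _) (val_bnd _) (val_bnd _)).
  assert (C * (Rabs (val (v1 x) - val (v1 p)) + Rabs (val (v2 x) - val (v2 p))) < C * (2 * d)).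
  { apply Rmult_lt_compat_l; lra. }
  assert (C * (2 * d) = e) by (unfold d; field; lra). lra.
Qed.

Lemma icont_lip2 {D : ConvSpace} (v1 v2 : D -> I01) phi C :
  filt D -> icont v1 -> icont v2 -> lip2 phi C ->
  icont (fun p => mkI (phi (val (v1 p)) (val (v2 p)))).
Proof. intros; apply icont_mkI; auto. eapply rcont_lip2; eauto. Qed.

Lemma glue {D W : ConvSpace} (psi : D -> R) (c : R) (H1 H2 : D -> W) :
  filt D -> upw D -> is_Lim W -> rcont psi -> continuous H1 -> continuous H2 ->
  (forall p, psi p = c -> H1 p = H2 p) ->
  continuous (fun p => if Rle_dec (psi p) c then H1 p else H2 p).
Proof.
  intros HD Hup [[_ [WU _]] WL] Hpsi C1 C2 Heq F p Hc.
  set (H := fun p => if Rle_dec (psi p) c then H1 p else H2 p).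
  assert (HF : is_filter F) by (eapply HD; eauto).
  assert (Hlt : F (fun x => psi x < c) -> psi p <= c).
  { intros Hl. destruct (Rle_dec (psi p) c) as [|n]; auto. exfalso.
    apply (fN F _ HF (fI F _ _ HF Hl (Hpsi F p Hc (psi p - c) ltac:(lra)))).
    intros x [a b]. unfold Rabs in b; destruct Rcase_abs in b; lra. }
  assert (Hgt : F (fun x => c < psi x) -> c <= psi p).
  { intros Hl. destruct (Rle_dec c (psi p)) as [|n]; auto. exfalso.
    apply (fN F _ HF (fI F _ _ HF Hl (Hpsi F p Hc (c - psi p) ltac:(lra)))).
    intros x [a b]. unfold Rabs in b; destruct Rcase_abs in b; lra. }
  destruct (classic (F (fun x => ~ psi x <= c))) as [A|A].
  - assert (Fg : F (fun x => c < psi x)) by (eapply fS; eauto; intros; lra).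
    assert (E : H p = H2 p).
    { unfold H; destruct Rle_dec; auto. apply Heq. specialize (Hgt Fg). lra. }
    change (conv (img H F) (H p)). rewrite E.
    eapply WU; [exact (C2 _ _ Hc)|apply filter_img; auto|].
    intros S HS. unfold img in *. eapply fS; [exact HF|exact (fI F _ _ HF HS A)|].
    intros x [a b]. unfold H; destruct Rle_dec; tauto.
  - destruct (classic (F (fun x => ~ c <= psi x))) as [B|B].
    + assert (Fl : F (fun x => psi x < c)) by (eapply fS; eauto; intros; lra).
      assert (E : H p = H1 p).
      { unfold H; destruct Rle_dec; auto. specialize (Hlt Fl). lra. }
      change (conv (img H F) (H p)). rewrite E.
      eapply WU; [exact (C1 _ _ Hc)|apply filter_img; auto|].
      intros S HS. unfold img in *. eapply fS; [exact HF|exact (fI F _ _ HF HS B)|].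
      intros x [a b]. unfold H; destruct Rle_dec; try tauto. lra.
    + assert (J1 : is_filter (fjoin F (fun x => psi x <= c))) by (apply filter_fjoin; auto).
      assert (J2 : is_filter (fjoin F (fun x => c <= psi x))) by (apply filter_fjoin; auto).
      assert (P1 : psi p <= c).
      { destruct (Rle_dec (psi p) c) as [|n]; auto. exfalso. apply A.
        eapply fS; [exact HF|exact (Hpsi F p Hc (psi p - c) ltac:(lra))|].
        intros x b. unfold Rabs in b; destruct Rcase_abs in b; lra. }
      assert (P2 : c <= psi p).
      { destruct (Rle_dec c (psi p)) as [|n]; auto. exfalso. apply B.
        eapply fS; [exact HF|exact (Hpsi F p Hc (c - psi p) ltac:(lra))|].
        intros x b. unfold Rabs in b; destruct Rcase_abs in b; lra. }
      assert (E1 : H p = H1 p) by (unfold H; destruct Rle_dec; [auto|lra]).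
      assert (E2 : H1 p = H2 p) by (apply Heq; lra).
      change (conv (img H F) (H p)). rewrite E1.
      assert (K1 := C1 _ _ (Hup _ _ _ Hc J1 (fjoin_sub F _ HF))).
      assert (K2 := C2 _ _ (Hup _ _ _ Hc J2 (fjoin_sub F _ HF))).
      rewrite <- E2 in K2.
      eapply WU; [exact (WL _ _ _ K1 K2)|apply filter_img; auto|].
      intros S [S1 S2]. unfold img, fjoin in *.
      eapply fS; [exact HF|exact (fI F _ _ HF S1 S2)|].
      intros x [a b]. unfold H; destruct Rle_dec as [r|r]; auto. apply b; lra.
Qed.

Lemma conv_filt {X : ConvSpace} : is_convergence X -> filt X.
Proof. intros [H _]; exact H. Qed.
Lemma Lim_conv {X : ConvSpace} : is_Lim X -> is_convergence X.
Proof. intros [H _]; exact H. Qed.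

Lemma cont_incl (X : ConvSpace) k : is_convergence X -> continuous (@incl X k).
Proof. intros HX. apply (pair_cont (fun x => x) (fun _ => k)); [apply conv_filt; auto|apply cont_id|apply icont_const, conv_filt; auto]. Qed.

Lemma cont_Icyl {X Y : ConvSpace} (f : X -> Y) : continuous f -> continuous (Icyl f).
Proof. intros Hf. apply (pair_cont (D := Cyl X) (fun p => f (fst p)) snd). apply cyl_filt.
  apply cont_comp; auto; apply cont_fst. apply icont_snd. Qed.

Definition repar {X : ConvSpace} (phi : R -> R) : Cyl X -> Cyl X :=
  fun p => (fst p, mkI (phi (val (snd p)))).

Lemma cont_repar {X : ConvSpace} phi C :
  0 < C -> (forall a a', 0 <= a <= 1 -> 0 <= a' <= 1 -> Rabs (phi a' - phi a) <= C * Rabs (a' - a)) ->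
  continuous (@repar X phi).
Proof.
  intros HC Hl. unfold repar.
  apply (pair_cont (D := Cyl X) fst (fun p => mkI ((fun a b => phi a) (val (snd p)) (val (snd p))))).

  apply cyl_filt. apply cont_fst.
  apply (icont_lip2 (D := Cyl X) snd snd (fun a b => phi a) C); [apply cyl_filt|apply icont_snd|apply icont_snd|].
  split; auto. intros. specialize (Hl a a' H H1). pose proof (Rabs_pos (b' - b)). nra.
Qed.

Lemma cont_repar_lin {X : ConvSpace} (m q : R) : continuous (@repar X (fun t => m * t + q)).
Proof.
  apply (cont_repar _ (Rabs m + 1)). pose proof (Rabs_pos m); lra.
  intros a a' _ _. replace (m * a' + q - (m * a + q)) with (m * (a' - a)) by ring.
  rewrite Rabs_mult. pose proof (Rabs_pos (a' - a)). nra.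
Qed.

Definition hrev {X Y : ConvSpace} (H : Cyl X -> Y) : Cyl X -> Y :=
  fun p => H (repar (fun t => -1 * t + 1) p).

Lemma hrev_cont {X Y : ConvSpace} (H : Cyl X -> Y) : continuous H -> continuous (hrev H).
Proof. intros; unfold hrev. apply (cont_comp (repar _) H); auto. apply cont_repar_lin. Qed.

Lemma hrev_val {X Y : ConvSpace} (H : Cyl X -> Y) x t : hrev H (x, t) = H (x, mkI (1 - val t)).
Proof. unfold hrev, repar; simpl. do 3 f_equal. ring. Qed.

Lemma mkI_1m (t : I01) : val (mkI (1 - val t)) = 1 - val t.
Proof. apply mkI_val. pose proof (val_bnd t); lra. Qed.

Lemma hrev_0 {X Y : ConvSpace} (H : Cyl X -> Y) x : hrev H (x, I0) = H (x, I1).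
Proof. rewrite hrev_val. f_equal. f_equal. apply I01_ext. rewrite mkI_1m. unfold val; simpl; lra. Qed.
Lemma hrev_1 {X Y : ConvSpace} (H : Cyl X -> Y) x : hrev H (x, I1) = H (x, I0).
Proof. rewrite hrev_val. f_equal. f_equal. apply I01_ext. rewrite mkI_1m. unfold val; simpl; lra. Qed.
Lemma hrev_rev {X Y : ConvSpace} (H : Cyl X -> Y) x t : hrev H (x, mkI (1 - val t)) = H (x, t).
Proof. rewrite hrev_val. f_equal. f_equal. apply I01_ext. rewrite !mkI_1m. lra. Qed.

Definition hcat {X Y : ConvSpace} (H K : Cyl X -> Y) : Cyl X -> Y :=
  fun p => if Rle_dec (val (snd p)) (1/2) then H (repar (fun t => 2 * t + 0) p)
           else K (repar (fun t => 2 * t + -1) p).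

Lemma hcat_cont {X Y : ConvSpace} (H K : Cyl X -> Y) :
  is_convergence X -> is_Lim Y -> continuous H -> continuous K ->
  (forall x, H (x, I1) = K (x, I0)) -> continuous (hcat H K).
Proof.
  intros HX HY CH CK E. unfold hcat.
  apply (glue (fun p : Cyl X => val (snd p)) (1/2)
     (fun p => H (repar (fun t => 2 * t + 0) p)) (fun p => K (repar (fun t => 2 * t + -1) p))).
  apply cyl_filt. apply cyl_upw; auto. auto. apply rcont_val, icont_snd.
  apply (cont_comp (repar _) H); auto; apply cont_repar_lin.
  apply (cont_comp (repar _) K); auto; apply cont_repar_lin.
  intros [x t] Ht. simpl in Ht. unfold repar; simpl.
  replace (mkI (2 * val t + 0)) with I1. replace (mkI (2 * val t + -1)) with I0. apply E.
  symmetry; apply mkI_eq; rewrite Ht; unfold val; simpl; lra.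
  symmetry; apply mkI_eq; rewrite Ht; unfold val; simpl; lra.
Qed.

Lemma hcat_0 {X Y : ConvSpace} (H K : Cyl X -> Y) x : hcat H K (x, I0) = H (x, I0).
Proof. unfold hcat, repar; simpl. destruct Rle_dec as [r|r]; [|unfold val in r; simpl in r; lra].
  f_equal; f_equal; apply mkI_eq; unfold val; simpl; lra. Qed.
Lemma hcat_1 {X Y : ConvSpace} (H K : Cyl X -> Y) x : hcat H K (x, I1) = K (x, I1).
Proof. unfold hcat, repar; simpl. destruct Rle_dec as [r|r]; [unfold val in r; simpl in r; lra|].
  f_equal; f_equal; apply mkI_eq; unfold val; simpl; lra. Qed.
Lemma hcat_const {X Y : ConvSpace} (H K : Cyl X -> Y) x v :
  (forall t, H (x, t) = v) -> (forall t, K (x, t) = v) -> forall t, hcat H K (x, t) = v.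
Proof. intros A B t. unfold hcat, repar; simpl. destruct Rle_dec; auto. Qed.

Lemma hrefl {X Y : ConvSpace} (f : X -> Y) : is_convergence X -> continuous f -> homotopic f f.
Proof. intros HX Hf. exists (fun p => f (fst p)). split; [|split; reflexivity].
  apply (cont_comp (X := Cyl X) fst f); [apply cont_fst|auto]. Qed.

Lemma hsym {X Y : ConvSpace} (f g : X -> Y) : homotopic f g -> homotopic g f.
Proof. intros [H [C [E0 E1]]]. exists (hrev H). split; [apply hrev_cont; auto|split; intros x].
  - unfold incl. rewrite hrev_0. apply E1.
  - unfold incl. rewrite hrev_1. apply E0. Qed.

Lemma htrans {X Y : ConvSpace} (f g h : X -> Y) : is_convergence X -> is_Lim Y ->
  homotopic f g -> homotopic g h -> homotopic f h.
Proof. intros HX HY [H [C [E0 E1]]] [K [D [F0 F1]]]. exists (hcat H K).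
  split; [apply hcat_cont; auto; intros x; unfold incl in *; rewrite E1, F0; auto|split; intros x; unfold incl].
  - rewrite hcat_0; apply E0.
  - rewrite hcat_1; apply F1. Qed.

Lemma hcomp_l {X Y Z : ConvSpace} (f g : X -> Y) (u : Y -> Z) : continuous u ->
  homotopic f g -> homotopic (fun x => u (f x)) (fun x => u (g x)).
Proof. intros Hu [H [C [E0 E1]]]. exists (fun p => u (H p)). split; [apply cont_comp; auto|split; intros x; simpl; f_equal; auto]. Qed.

Lemma hcomp_r {W X Y : ConvSpace} (f g : X -> Y) (v : W -> X) : continuous v ->
  homotopic f g -> homotopic (fun x => f (v x)) (fun x => g (v x)).
Proof. intros Hv [H [C [E0 E1]]]. exists (fun p => H (Icyl v p)). split.
  apply (cont_comp (Icyl v) H); [apply cont_Icyl; auto|auto].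
  split; intros x. apply (E0 (v x)). apply (E1 (v x)). Qed.

Lemma heq {X Y : ConvSpace} (f g f' g' : X -> Y) : homotopic f g ->
  (forall x, f x = f' x) -> (forall x, g x = g' x) -> homotopic f' g'.
Proof. intros H E1 E2. apply functional_extensionality in E1, E2. subst; auto. Qed.

Section WE.
Variables X Y Z : ConvSpace.
Hypothesis (HX : is_Lim X) (HY : is_Lim Y) (HZ : is_Lim Z).
Variables (f : X -> Y) (g : Y -> Z).
Hypothesis (Cf : continuous f) (Cg : continuous g).

Lemma we_comp : we f -> we g -> we (fun x => g (f x)).
Proof.
  intros [_ [f' [Cf' [A1 A2]]]] [_ [g' [Cg' [B1 B2]]]].
  split; [apply cont_comp; auto|]. exists (fun z => f' (g' z)). split; [apply cont_comp; auto|split].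
  - apply htrans with (g := fun z => g (g' z)); try apply Lim_conv; auto.
    apply (hcomp_l (fun z => f (f' (g' z))) (fun z => g' z) g); auto.
    apply (hcomp_r (fun y => f (f' y)) (fun y => y) g'); auto.
  - apply htrans with (g := fun x => f' (f x)); try apply Lim_conv; auto.
    apply (hcomp_l (fun x => g' (g (f x))) (fun x => f x) f'); auto.
    apply (hcomp_r (fun y => g' (g y)) (fun y => y) f); auto.
Qed.

Lemma we_2a : we f -> we (fun x => g (f x)) -> we g.
Proof.
  intros [_ [f' [Cf' [A1 A2]]]] [_ [h [Ch [B1 B2]]]].
  split; auto. exists (fun z => f (h z)). split; [apply cont_comp; auto|split].
  - exact B1.
  - apply htrans with (g := fun y => f (h (g (f (f' y))))); try apply Lim_conv; auto.
    + apply hsym. apply (hcomp_l (fun y => f (f' y)) (fun y => y) (fun y => f (h (g y)))); auto.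
      apply cont_comp; auto. apply cont_comp; auto.
    + apply htrans with (g := fun y => f (f' y)); try apply Lim_conv; auto.
      apply (hcomp_l (fun y => h (g (f (f' y)))) (fun y => f' y) f); auto.
      apply (hcomp_r (fun x => h (g (f x))) (fun x => x) f'); auto.
Qed.

Lemma we_2b : we g -> we (fun x => g (f x)) -> we f.
Proof.
  intros [_ [g' [Cg' [A1 A2]]]] [_ [h [Ch [B1 B2]]]].
  split; auto. exists (fun y => h (g y)). split; [apply cont_comp; auto|split].
  - apply htrans with (g := fun y => g' (g (f (h (g y))))); try apply Lim_conv; auto.
    + apply hsym. apply (hcomp_r (fun y => g' (g y)) (fun y => y) (fun y => f (h (g y)))); auto.
      apply cont_comp; auto. apply cont_comp; auto.
    + apply htrans with (g := fun y => g' (g y)); try apply Lim_conv; auto.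
      apply (hcomp_l (fun y => g (f (h (g y)))) (fun y => g y) g'); auto.
      apply (hcomp_r (fun z => g (f (h z))) (fun z => z) g); auto.
  - exact B2.
Qed.
End WE.

Lemma we_ext {X Y : ConvSpace} (f f' : X -> Y) : we f -> (forall x, f x = f' x) -> we f'.
Proof. intros H E; apply functional_extensionality in E; subst; auto. Qed.
Lemma cof_ext P {X Y : ConvSpace} (f f' : X -> Y) : cof P f -> (forall x, f x = f' x) -> cof P f'.
Proof. intros H E; apply functional_extensionality in E; subst; auto. Qed.

Lemma we_iso {X Y : ConvSpace} (f : X -> Y) : is_convergence X -> is_convergence Y -> is_iso f -> we f.
Proof.
  intros HX HY [Cf [g [Cg [E1 E2]]]]. split; auto. exists g. split; auto. split.
  - eapply heq. apply (hrefl (fun y => y)); auto; apply cont_id. intros; rewrite E2; auto. auto.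
  - eapply heq. apply (hrefl (fun y => y)); auto; apply cont_id. intros; rewrite E1; auto. auto.
Qed.

Lemma HEP_iso P k {B A : ConvSpace} (f : B -> A) : is_iso f -> HEP_at P k f.
Proof.
  intros [Cf [g [Cg [E1 E2]]]] Y PY u G Cu CG E.
  exists (fun p => G (Icyl g p)). split; [apply (cont_comp (Icyl g) G); auto; apply cont_Icyl; auto|split].
  - intros a. change (G (incl k (g a)) = u a). rewrite <- E. rewrite E2; auto.
  - intros [b t]. unfold Icyl; simpl. rewrite E1; auto.
Qed.

Lemma cof_iso P {B A : ConvSpace} (f : B -> A) : is_iso f -> cof P f.
Proof. intros H. split; [apply H|split; apply HEP_iso; auto]. Qed.

Lemma HEP_comp P k {X Y Z : ConvSpace} (f : X -> Y) (g : Y -> Z) :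
  continuous g -> HEP_at P k f -> HEP_at P k g -> HEP_at P k (fun x => g (f x)).
Proof.
  intros Cg Hf Hg W PW u G Cu CG E.
  destruct (Hf W PW (fun y => u (g y)) G (cont_comp _ _ Cg Cu) CG E) as [H1 [C1 [E1 F1]]].
  destruct (Hg W PW u H1 Cu C1 (fun y => eq_sym (E1 y))) as [H2 [C2 [E2 F2]]].
  exists H2. split; auto. split; auto. intros p. rewrite <- F1. rewrite <- F2. reflexivity.
Qed.

Lemma cof_comp P {X Y Z : ConvSpace} (f : X -> Y) (g : Y -> Z) :
  cof P f -> cof P g -> cof P (fun x => g (f x)).
Proof. intros [Cf [H0 H1]] [Cg [K0 K1]]. split; [apply cont_comp; auto|split; apply HEP_comp; auto]. Qed.

Lemma HEP_01 P {B A : ConvSpace} (i : B -> A) : HEP_at P I0 i -> HEP_at P I1 i.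
Proof.
  intros H Y PY f G Cf CG E.
  destruct (H Y PY f (hrev G) Cf (hrev_cont G CG)) as [K [CK [E1 E2]]].
  { intros b. unfold incl. rewrite hrev_0. apply E. }
  exists (hrev K). split; [apply hrev_cont; auto|split].
  - intros a. unfold incl. rewrite hrev_1. apply E1.
  - intros [b t]. unfold Icyl; simpl. rewrite hrev_val.
    specialize (E2 (b, mkI (1 - val t))). unfold Icyl in E2; simpl in E2. rewrite E2.
    apply hrev_rev.
Qed.

Definition GP (P : ConvSpace -> Prop) {B A Y Q : ConvSpace} (i : B -> A) (f : B -> Y)
  (fbar : A -> Q) (ibar : Y -> Q) : Prop :=
  is_pushout P i f fbar ibar /\
  (forall q : Q, (exists a, q = fbar a) \/ (exists y, q = ibar y)) /\
  (forall W : ConvSpace, P W -> forall (H1 : Cyl A -> W) (H2 : Cyl Y -> W),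
     continuous H1 -> continuous H2 -> (forall b t, H1 (i b, t) = H2 (f b, t)) ->
     exists H : Cyl Q -> W, continuous H /\ (forall a t, H (fbar a, t) = H1 (a, t)) /\
        (forall y t, H (ibar y, t) = H2 (y, t))).

Section PO.
Variables (B A Y : ConvSpace) (i : B -> A) (f : B -> Y).
Hypothesis (HA : is_convergence A) (HY : is_convergence Y) (Ci : continuous i) (Cf : continuous f).

Inductive EqR : A + Y -> A + Y -> Prop :=
| EqR_refl z : EqR z z
| EqR_sym z w : EqR z w -> EqR w z
| EqR_trans z w u : EqR z w -> EqR w u -> EqR z u
| EqR_base b : EqR (inl (i b)) (inr (f b)).

Definition Qt : Type := { S : A + Y -> Prop | exists z, S = EqR z }.
Definition pr (z : A + Y) : Qt := exist _ (EqR z) (ex_intro _ z eq_refl).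

Lemma sig_ext {T} {P : T -> Prop} (x y : sig P) : proj1_sig x = proj1_sig y -> x = y.
Proof. destruct x, y; simpl; intros ->; f_equal; apply proof_irrelevance. Qed.

Lemma pr_eq z w : EqR z w -> pr z = pr w.
Proof.
  intros H. unfold pr.
  assert (E : EqR z = EqR w).
  { apply functional_extensionality; intros u; apply propositional_extensionality; split; intros K.
    - eapply EqR_trans; [apply EqR_sym; exact H|exact K].
    - eapply EqR_trans; [exact H|exact K]. }
  apply sig_ext. exact E.
Qed.

Lemma pr_surj (q : Qt) : exists z, q = pr z.
Proof.
  destruct q as [S [z Hz]]. exists z. subst. unfold pr. f_equal.
Qed.

Definition rep (q : Qt) : A + Y := proj1_sig (constructive_indefinite_description _ (pr_surj q)).
Lemma rep_spec q : q = pr (rep q).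
Proof. unfold rep. destruct constructive_indefinite_description; auto. Qed.
Lemma pr_inv z w : pr z = pr w -> EqR z w.
Proof. intros H. assert (E : EqR z = EqR w) by (apply (f_equal (@proj1_sig _ _)) in H; exact H).
  rewrite E. apply EqR_refl. Qed.
Lemma rep_pr z : EqR (rep (pr z)) z.
Proof. apply pr_inv. rewrite <- rep_spec. auto. Qed.

Definition fb (a : A) : Qt := pr (inl a).
Definition ib (y : Y) : Qt := pr (inr y).

Inductive LG (F : (Qt -> Prop) -> Prop) (q : Qt) : Prop :=
| LGl (G : (A -> Prop) -> Prop) a : conv G a -> fb a = q -> filter_sub (img fb G) F -> LG F q
| LGr (G : (Y -> Prop) -> Prop) y : conv G y -> ib y = q -> filter_sub (img ib G) F -> LG F q
| LGc F1 F2 : is_filter F1 -> is_filter F2 -> LG F1 q -> LG F2 q -> filter_sub (filter_cap F1 F2) F -> LG F q.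

Definition Qc : ConvSpace := {| carrier := Qt; conv := fun F q => is_filter F /\ LG F q |}.

Lemma Qc_Lim : is_Lim Qc.
Proof.
  split; [split; [|split]|].
  - intros F q [H _]; exact H.
  - intros F G q [HF L] HG sub. split; auto. apply (LGc G q F F HF HF L L). intros S [S1 _]; auto.
  - intros q. split; [apply filter_principal|]. destruct (pr_surj q) as [[a|y] ->].
    + apply (LGl _ _ (principal a) a); [apply HA|reflexivity|]. intros S HS; exact HS.
    + apply (LGr _ _ (principal y) y); [apply HY|reflexivity|]. intros S HS; exact HS.
  - intros F G q [HF L1] [HG L2]. split; [apply filter_cap_is; auto|].
    apply (LGc _ q F G HF HG L1 L2). intros S HS; exact HS.
Qed.

Lemma fb_cont : @continuous A Qc fb.
Proof. intros G a H. split; [apply filter_img; eapply conv_filt; eauto|].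
  apply (LGl _ _ G a H eq_refl). intros S HS; exact HS. Qed.
Lemma ib_cont : @continuous Y Qc ib.
Proof. intros G a H. split; [apply filter_img; eapply conv_filt; eauto|].
  apply (LGr _ _ G a H eq_refl). intros S HS; exact HS. Qed.
Lemma fb_ib b : fb (i b) = ib (f b).
Proof. apply pr_eq, EqR_base. Qed.

Section Desc.
Variables (W : ConvSpace) (u : A -> W) (v : Y -> W).
Hypothesis (Euv : forall b, u (i b) = v (f b)).
Definition uv (z : A + Y) : W := match z with inl a => u a | inr y => v y end.
Lemma uv_resp z w : EqR z w -> uv z = uv w.
Proof. induction 1; simpl; auto. congruence. Qed.
Definition desc (q : Qt) : W := uv (rep q).
Lemma desc_fb a : desc (fb a) = u a.
Proof. unfold desc, fb. apply (uv_resp _ _ (rep_pr (inl a))). Qed.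
Lemma desc_ib y : desc (ib y) = v y.
Proof. unfold desc, ib. apply (uv_resp _ _ (rep_pr (inr y))). Qed.
End Desc.

Lemma desc_cont (W : ConvSpace) (u : A -> W) (v : Y -> W) (Euv : forall b, u (i b) = v (f b)) : is_Lim W -> continuous u -> continuous v ->
  @continuous Qc W (desc W u v).
Proof.
  intros [[Wf [Wup _]] WL] Cu Cv F q [HF L]. revert HF. induction L; intros HF.
  - subst q. rewrite (desc_fb _ _ _ Euv). eapply Wup; [exact (Cu _ _ H)|apply filter_img; auto|].
    intros S HS. apply H1. unfold img in *. eapply fS; [eapply conv_filt; eauto|exact HS|].
    intros x Hx. rewrite (desc_fb _ _ _ Euv); auto.
  - subst q. rewrite (desc_ib _ _ _ Euv). eapply Wup; [exact (Cv _ _ H)|apply filter_img; auto|].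
    intros S HS. apply H1. unfold img in *. eapply fS; [eapply conv_filt; eauto|exact HS|].
    intros x Hx. rewrite (desc_ib _ _ _ Euv); auto.
  - eapply Wup; [exact (WL _ _ _ (IHL1 H) (IHL2 H0))|apply filter_img; auto|].
    intros S HS. apply H1. exact HS.
Qed.

Lemma Qc_pushout : is_pushout is_Lim i f (fb : A -> Qc) (ib : Y -> Qc).
Proof.
  split; [apply Qc_Lim|split; [apply fb_cont|split; [apply ib_cont|split; [apply fb_ib|]]]].
  intros Z PZ u v Cu Cv E. exists (desc Z u v). split; [apply desc_cont; auto|split; [apply (desc_fb _ _ _ E)|split; [apply (desc_ib _ _ _ E)|]]].
  intros h' _ E1 E2 q. destruct (pr_surj q) as [[a|y] ->].
  - change (h' (fb a) = desc Z u v (fb a)). rewrite (desc_fb _ _ _ E); auto.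
  - change (h' (ib y) = desc Z u v (ib y)). rewrite (desc_ib _ _ _ E); auto.
Qed.

Lemma Qc_surj (q : Qc) : (exists a, q = fb a) \/ (exists y, q = ib y).
Proof. destruct (pr_surj q) as [[a|y] ->]; [left|right]; eexists; reflexivity. Qed.

Section CDesc.
Variables (W : ConvSpace) (H1 : Cyl A -> W) (H2 : Cyl Y -> W).
Hypothesis (E12 : forall b t, H1 (i b, t) = H2 (f b, t)).
Definition cdesc (p : Cyl Qc) : W := desc W (fun a => H1 (a, snd p)) (fun y => H2 (y, snd p)) (fst p).
Lemma cdesc_fb a t : cdesc (fb a, t) = H1 (a, t).
Proof. unfold cdesc; simpl. exact (desc_fb W (fun a => H1 (a, t)) (fun y => H2 (y, t)) (fun b => E12 b t) a). Qed.
Lemma cdesc_ib y t : cdesc (ib y, t) = H2 (y, t).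
Proof. unfold cdesc; simpl. exact (desc_ib W (fun a => H1 (a, t)) (fun y => H2 (y, t)) (fun b => E12 b t) y). Qed.

Hypothesis (WL : is_Lim W) (C1 : continuous H1) (C2 : continuous H2).

Lemma cdesc_cont_aux q t : forall F0, is_filter F0 -> LG F0 q -> forall N, is_filter N -> I01_conv N t ->
  conv (img cdesc (fprod F0 N)) (cdesc (q, t)).
Proof.
  destruct WL as [[Wf [Wup _]] WLc].
  intros F0 HF0 L. induction L as [F0 q G a Ga Ea Sa|F0 q G y Gy Ey Sy|F0 q F1 F2 HF1 HF2 L1 IH1 L2 IH2 Sc]; intros N HN Nt.
  - subst. rewrite cdesc_fb.
    assert (HG : is_filter G) by (eapply conv_filt; [apply HA|exact Ga]).
    assert (K : conv (img H1 (fprod G N)) (H1 (a, t))).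
    { apply C1. split; [apply filter_fprod; auto|split].
      - eapply (proj1 (proj2 HA)); [exact Ga|apply filter_img, filter_fprod; auto|].
        intros S HS. exists S, (fun _ => True). split; auto. split; [apply fT; auto|auto].
      - eapply I01_up; [exact Nt|apply filter_img, filter_fprod; auto|].
        intros S HS. exists (fun _ => True), S. split; [apply fT; auto|split; auto]. }
    eapply Wup; [exact K|apply filter_img, filter_fprod; auto|].
    intros S [S1 [T1 [GS1 [NT1 HS]]]]. unfold img.
    exists (fun q' => exists a', S1 a' /\ q' = fb a'), T1. split; [|split; auto].
    + apply Sa. unfold img. eapply fS; [exact HG|exact GS1|]. intros a' Ha'. eauto.
    + intros q' t' [a' [Ha' ->]] Ht'. rewrite cdesc_fb. auto.
  - subst. rewrite cdesc_ib.
    assert (HG : is_filter G) by (eapply conv_filt; [apply HY|exact Gy]).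
    assert (K : conv (img H2 (fprod G N)) (H2 (y, t))).
    { apply C2. split; [apply filter_fprod; auto|split].
      - eapply (proj1 (proj2 HY)); [exact Gy|apply filter_img, filter_fprod; auto|].
        intros S HS. exists S, (fun _ => True). split; auto. split; [apply fT; auto|auto].
      - eapply I01_up; [exact Nt|apply filter_img, filter_fprod; auto|].
        intros S HS. exists (fun _ => True), S. split; [apply fT; auto|split; auto]. }
    eapply Wup; [exact K|apply filter_img, filter_fprod; auto|].
    intros S [S1 [T1 [GS1 [NT1 HS]]]]. unfold img.
    exists (fun q' => exists a', S1 a' /\ q' = ib a'), T1. split; [|split; auto].
    + apply Sy. unfold img. eapply fS; [exact HG|exact GS1|]. intros a' Ha'. eauto.
    + intros q' t' [a' [Ha' ->]] Ht'. rewrite cdesc_ib. auto.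
  - eapply Wup; [exact (WLc _ _ _ (IH1 HF1 N HN Nt) (IH2 HF2 N HN Nt))|apply filter_img, filter_fprod; auto|].
    intros S [[S1 [T1 [A1 [B1 D1]]]] [S2 [T2 [A2 [B2 D2]]]]]. unfold img.
    exists (fun q' => S1 q' \/ S2 q'), (fun t' => T1 t' /\ T2 t'). split; [|split; [apply fI; auto|]].
    + apply Sc. split; [eapply fS; [exact HF1|exact A1|]|eapply fS; [exact HF2|exact A2|]]; auto.
    + intros q' t' [K|K] [K1 K2]; auto.
Qed.

Lemma cdesc_cont : @continuous (Cyl Qc) W cdesc.
Proof.
  intros F [q t] [HF [[Hq L] Ht]]. destruct WL as [[Wf [Wup _]] _].
  eapply Wup; [exact (cdesc_cont_aux q t _ Hq L _ (proj1 Ht) Ht)|apply filter_img; auto|].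
  intros S [S1 [T1 [A1 [B1 D1]]]]. unfold img in *.
  eapply fS; [exact HF|exact (fI F _ _ HF A1 B1)|]. intros [q' t'] [K1 K2]; simpl in *. auto.
Qed.
End CDesc.

Lemma Qc_GP : GP is_Lim i f (fb : A -> Qc) (ib : Y -> Qc).
Proof.
  split; [apply Qc_pushout|split; [apply Qc_surj|]].
  intros W PW H1 H2 C1 C2 E. exists (cdesc W H1 H2). split; [apply cdesc_cont; auto|split; [apply (cdesc_fb W H1 H2 E)|apply (cdesc_ib W H1 H2 E)]].
Qed.
End PO.

Definition psr (X : ConvSpace) : ConvSpace :=
  {| carrier := X; conv := fun F x => is_filter F /\ forall U, is_ultrafilter U -> filter_sub F U -> conv U x |}.

Lemma psr_PsTop X : is_convergence X -> is_PsTop (psr X).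
Proof.
  intros [Xf [Xup Xp]]. split; [split; [|split]|].
  - intros F x [H _]; exact H.
  - intros F G x [HF H] HG sub. split; auto. intros U HU sub'. apply H; auto. intros A HA; apply sub', sub, HA.
  - intros x. split; [apply filter_principal|]. intros U HU sub. eapply Xup; [apply Xp|apply HU|exact sub].
  - intros F x HF. split.
    + intros [_ H] U HU sub. split; [apply HU|]. intros U' HU' sub'.
      eapply Xup; [apply (H U HU sub)|apply HU'|exact sub'].
    + intros H. split; auto. intros U HU sub. destruct (H U HU sub) as [_ K]. apply K; auto. intros A HA; exact HA.
Qed.

Lemma psr_in {A X : ConvSpace} (u : A -> X) : is_convergence X -> continuous u -> @continuous A (psr X) u.
Proof.
  intros [Xf [Xup _]] Cu F a H. split; [eapply Xf; eauto|]. intros U HU sub.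
  eapply Xup; [exact (Cu _ _ H)|apply HU|exact sub].
Qed.

Lemma ultra_lift {X W : Type} (h : X -> W) F V : is_filter F -> is_ultrafilter V -> filter_sub (img h F) V ->
  exists U, is_ultrafilter U /\ filter_sub F U /\ filter_sub V (img h U).
Proof.
  intros HF HV sub.
  set (F' := fun S : X -> Prop => exists E T, F E /\ V T /\ forall x, E x -> T (h x) -> S x).
  assert (HF' : is_filter F').
  { unfold F'. split; [|split; [|split]].
    - exists (fun _ => True), (fun _ => True). split; [apply fT; auto|split; [apply fT, HV|auto]].
    - intros [E [T [FE [VT K]]]]. assert (V (fun w => ~ T w)).
      { apply sub. unfold img. eapply fS; [exact HF|exact FE|]. intros x Ex Tx. exact (K x Ex Tx). }
      apply (fN V _ (proj1 HV) (fI V _ _ (proj1 HV) VT H)). intros w [a b]; auto.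
    - intros S S' [E [T [FE [VT K]]]] HS. exists E, T. split; [|split]; auto.
    - intros S S' [E [T [FE [VT K]]]] [E' [T' [FE' [VT' K']]]]. exists (fun x => E x /\ E' x), (fun w => T w /\ T' w).
      split; [apply fI; auto|split; [apply fI; [apply HV| |]; auto|]]. intros x [] []; split; auto. }
  destruct (ultra_exists F' HF') as [U [HU sU]]. exists U. split; auto. split.
  - intros S HS. apply sU. exists S, (fun _ => True). split; auto. split; [apply fT, HV|auto].
  - intros T VT. apply sU. exists (fun _ => True), T. split; [apply fT; auto|split; auto].
Qed.

Lemma ultra_max_sub {W} (V G : (W -> Prop) -> Prop) : is_ultrafilter V -> is_filter G -> filter_sub V G -> filter_sub G V.
Proof. intros [_ H] HG sub; apply H; auto. Qed.

Lemma psr_out {X W : ConvSpace} (h : X -> W) : is_PsTop W -> continuous h -> @continuous (psr X) W h.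
Proof.
  intros [[Wf [Wup _]] WP] Ch F x [HF H]. apply (WP _ _ (filter_img h F HF)). intros V HV sub.
  destruct (ultra_lift h F V HF HV sub) as [U [HU [sFU sVU]]].
  pose proof (Ch _ _ (H U HU sFU)) as K.
  eapply Wup; [exact K|apply HV|]. apply ultra_max_sub; auto. apply filter_img, HU.
Qed.

Lemma psr_cyl_out {X W : ConvSpace} (H : Cyl X -> W) : is_PsTop W -> continuous H -> @continuous (Cyl (psr X)) W H.
Proof.
  intros [[Wf [Wup _]] WP] CH F [x t] [HF [[_ Hx] Ht]]. apply (WP _ _ (filter_img H F HF)). intros V HV sub.
  destruct (ultra_lift H F V HF HV sub) as [U [HU [sFU sVU]]].
  assert (CU : @conv (Cyl X) U (x, t)).
  { split; [apply HU|split].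
    - apply Hx. apply ultra_img; auto. intros S HS; apply sFU, HS.
    - eapply I01_up; [exact Ht|apply filter_img, HU|]. intros S HS; apply sFU, HS. }
  pose proof (CH _ _ CU) as K.
  eapply Wup; [exact K|apply HV|]. apply ultra_max_sub; auto. apply filter_img, HU.
Qed.

Lemma pushout_Lim {B A Y : ConvSpace} (i : B -> A) (f : B -> Y) :
  is_convergence A -> is_convergence Y -> continuous i -> continuous f ->
  exists (Q : ConvSpace) (fbar : A -> Q) (ibar : Y -> Q), GP is_Lim i f fbar ibar.
Proof. intros HA HY Ci Cf. exists (Qc B A Y i f), (fb B A Y i f), (ib B A Y i f). apply Qc_GP; auto. Qed.

Lemma pushout_PsTop {B A Y : ConvSpace} (i : B -> A) (f : B -> Y) :
  is_convergence A -> is_convergence Y -> continuous i -> continuous f ->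
  exists (Q : ConvSpace) (fbar : A -> Q) (ibar : Y -> Q), GP is_PsTop i f fbar ibar.
Proof.
  intros HA HY Ci Cf. pose proof (Qc_GP B A Y i f HA HY) as [[_ [Cfb [Cib [Ecomm UP]]]] [Surj CD]].
  pose proof (Qc_Lim B A Y i f HA HY) as QL.
  exists (psr (Qc B A Y i f)), (fb B A Y i f), (ib B A Y i f).
  split; [split; [apply psr_PsTop, QL|split; [apply psr_in; [apply QL|auto]|split; [apply psr_in; [apply QL|auto]|split; auto]]]|split; auto].
  - intros Z PZ u v Cu Cv E. destruct (UP Z (PsTop_Lim Z PZ) u v Cu Cv E) as [h [Ch [E1 [E2 Uq]]]].
    exists h. split; [apply psr_out; auto|split; auto; split; auto].
    intros h' _ E1' E2' q. destruct (Surj q) as [[a ->]|[y ->]].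
    + rewrite E1', E1; auto.
    + rewrite E2', E2; auto.
  - intros W PW H1 H2 C1 C2 E. destruct (CD W (PsTop_Lim W PW) H1 H2 C1 C2 E) as [H [CH [E1 E2]]].
    exists H. split; [apply psr_cyl_out; auto|auto].
Qed.

Lemma cont_ff {X : ConvSpace} : @continuous (Cyl (Cyl X)) X (fun p => fst (fst p)).
Proof. apply (cont_comp (X := Cyl (Cyl X)) (Y := Cyl X) fst fst); apply cont_fst. Qed.
Lemma icont_sf {X : ConvSpace} : @icont (Cyl (Cyl X)) (fun p => snd (fst p)).
Proof. apply (icont_comp (D := Cyl (Cyl X)) (D' := Cyl X) fst snd); [apply cont_fst|apply icont_snd]. Qed.

Lemma cont_swap {X : ConvSpace} : @continuous (Cyl (Cyl X)) (Cyl (Cyl X)) (fun p => ((fst (fst p), snd p), snd (fst p))).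
Proof.
  apply (pair_cont (D := Cyl (Cyl X)) (X := Cyl X) (fun p => (fst (fst p), snd p)) (fun p => snd (fst p))).
  apply cyl_filt. apply (pair_cont (D := Cyl (Cyl X))). apply cyl_filt. apply cont_ff. apply icont_snd.
  apply icont_sf.
Qed.

Lemma cont_in2 {X : ConvSpace} k : is_convergence X -> @continuous (Cyl X) (Cyl (Cyl X)) (fun p => ((fst p, k), snd p)).
Proof.
  intros HX. apply (pair_cont (D := Cyl X) (X := Cyl X) (fun p => (fst p, k)) snd). apply cyl_filt.
  apply (pair_cont (D := Cyl X)). apply cyl_filt. apply cont_fst. apply icont_const, cyl_filt. apply icont_snd.
Qed.

Section Abstract.
Variable P : ConvSpace -> Prop.
Hypothesis HP1 : forall X, P X -> is_Lim X.
Hypothesis HP2 : forall (B A Y : ConvSpace) (i : B -> A) (f : B -> Y),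
  is_convergence A -> is_convergence Y -> continuous i -> continuous f ->
  exists (Q : ConvSpace) (fbar : A -> Q) (ibar : Y -> Q), GP P i f fbar ibar.

Lemma PC {X} : P X -> is_convergence X. Proof. intros H; apply Lim_conv, HP1, H. Qed.

Lemma pushout_HEP k {B A Y Q : ConvSpace} (i : B -> A) (f : B -> Y) (fbar : A -> Q) (ibar : Y -> Q) :
  continuous f -> GP P i f fbar ibar -> HEP_at P k i -> HEP_at P k ibar.
Proof.
  intros Cf [[PQ [Cfb [Cib [Ecomm UP]]]] [Surj CD]] Hi W PW F G CF CG E.
  destruct (Hi W PW (fun a => F (fbar a)) (fun p => G (Icyl f p)) (cont_comp _ _ Cfb CF)
    (cont_comp _ _ (cont_Icyl f ltac:(auto)) CG)) as [H1 [C1 [E1 F1]]].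
  { intros b. rewrite Ecomm. apply E. }
  destruct (CD W PW H1 G C1 CG) as [H [CH [EH1 EH2]]].
  { intros b t. apply (F1 (b, t)). }
  exists H. split; auto. split.
  - intros q. destruct (Surj q) as [[a ->]|[y ->]].
    + unfold incl. rewrite EH1. apply E1.
    + unfold incl. rewrite EH2. symmetry; apply E.
  - intros [y t]. unfold Icyl; simpl. apply EH2.
Qed.

Lemma pushout_cof {B A Y Q : ConvSpace} (i : B -> A) (f : B -> Y) (fbar : A -> Q) (ibar : Y -> Q) :
  continuous f -> GP P i f fbar ibar -> cof P i -> cof P ibar.
Proof.
  intros Cf HG [Ci [H0 H1]]. split; [apply HG|split; eapply pushout_HEP; eauto].
Qed.

Lemma param_HEP {B A : ConvSpace} (i : B -> A) : is_convergence B -> is_convergence A -> continuous i -> HEP_at P I0 i ->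
  forall Y, P Y -> forall (F : Cyl A -> Y) (G : Cyl (Cyl B) -> Y), continuous F -> continuous G ->
  (forall b t, F (i b, t) = G ((b, t), I0)) ->
  exists Psi : Cyl (Cyl A) -> Y, continuous Psi /\ (forall a t, Psi ((a, t), I0) = F (a, t)) /\
    (forall b t s, Psi ((i b, t), s) = G ((b, t), s)).
Proof.
  intros HB HA Ci Hi Y PY F G CF CG E.
  destruct (HP2 B A (Cyl B) i (incl I0) HA (cyl_convergence B HB) Ci (cont_incl B I0 HB))
    as [M [inA [inC [[PM [CA [CC [Ec UP]]]] [Surj CD]]]]].
  destruct (Hi M PM inA inC CA CC Ec) as [rho [Crho [Er1 Er2]]].
  destruct (CD Y PY F (fun q => G ((fst (fst q), snd q), snd (fst q))) CF (cont_comp _ _ cont_swap CG)) as [Ga [CGa [EG1 EG2]]].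
  { intros b t. simpl. apply E. }
  exists (fun p => Ga (rho (fst (fst p), snd p), snd (fst p))). split; [|split].
  - apply (cont_comp (X := Cyl (Cyl A)) (Y := Cyl M) (fun p => (rho (fst (fst p), snd p), snd (fst p))) Ga); auto.
    apply (pair_cont (D := Cyl (Cyl A))). apply cyl_filt.
    apply (cont_comp (X := Cyl (Cyl A)) (Y := Cyl A) (fun p => (fst (fst p), snd p)) rho); auto.
    apply (pair_cont (D := Cyl (Cyl A))). apply cyl_filt. apply cont_ff. apply icont_snd.
    apply icont_sf.
  - intros a t. simpl. change (a, I0) with (incl I0 a). rewrite (Er1 a). apply EG1.
  - intros b t s. simpl. change (i b, s) with (Icyl i (b, s)). rewrite (Er2 (b, s)). rewrite EG2. reflexivity.
Qed.
End Abstract.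

Definition phiL (t s : R) := Rmax (Rabs (1 - 2 * t)) s.
Lemma phiL_lip : lip2 phiL 2.
Proof. split; [lra|]. intros a b a' b' _ _ _ _. unfold phiL, Rmax.
  repeat destruct Rle_dec; unfold Rabs in *; repeat destruct Rcase_abs; lra. Qed.

Lemma val_mk2 (t : I01) : val t <= 1/2 -> val (mkI (2 * val t + 0)) = 2 * val t.
Proof. intros; rewrite mkI_val; pose proof (val_bnd t); lra. Qed.

Ltac solveI t := pose proof (val_bnd t); unfold val, mkI, phiL in *; simpl in *;
  unfold Rmax, Rmin in *; repeat destruct Rle_dec; unfold Rabs in *; repeat destruct Rcase_abs; lra.

Section Abstract2.
Variable P : ConvSpace -> Prop.
Hypothesis HP1 : forall X, P X -> is_Lim X.
Hypothesis HP2 : forall (B A Y : ConvSpace) (i : B -> A) (f : B -> Y),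
  is_convergence A -> is_convergence Y -> continuous i -> continuous f ->
  exists (Q : ConvSpace) (fbar : A -> Q) (ibar : Y -> Q), GP P i f fbar ibar.

Lemma sdr {B A : ConvSpace} (i : B -> A) : P B -> P A -> cof P i -> we i ->
  exists (r : A -> B) (Dh : Cyl A -> A), continuous r /\ (forall b, r (i b) = b) /\ continuous Dh /\
    (forall a, Dh (a, I0) = a) /\ (forall a, Dh (a, I1) = i (r a)) /\ (forall b t, Dh (i b, t) = i b).
Proof.
  intros PB PA [Ci [Hi0 Hi1]] [_ [g [Cg [HA1 HB1]]]].
  pose proof (PC P HP1 PB) as CB. pose proof (PC P HP1 PA) as CA. pose proof (HP1 A PA) as LA.
  destruct HB1 as [K [CK [K0 K1]]].
  destruct (Hi0 B PB g K Cg CK (fun b => eq_sym (K0 b))) as [H [CH [H0 Hc]]].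
  set (r := fun a => H (a, I1)).
  assert (Cr : continuous r) by (apply (cont_comp (incl I1) H); auto; apply cont_incl; auto).
  assert (Er : forall b, r (i b) = b).
  { intros b. unfold r. change (i b, I1) with (Icyl i (b, I1)). rewrite Hc. apply K1. }
  assert (HL : homotopic (fun a => a) (fun a => i (r a))).
  { apply htrans with (g := fun a => i (g a)); auto. apply hsym; auto.
    apply hcomp_l; auto. exists H. split; auto. }
  destruct HL as [L [CL [L0 L1]]]. unfold incl in L0, L1.
  destruct (Hi0 A PA (fun a => a) (hrev (fun p => L (Icyl i p))) cont_id
     (hrev_cont _ (cont_comp _ _ (cont_Icyl i Ci) CL))) as [N [CN [N0 Nc]]].
  { intros b. unfold incl. rewrite hrev_0. unfold Icyl; simpl. rewrite L1, Er. auto. }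
  unfold incl in N0.
  set (e := fun a => N (a, I1)).
  assert (Ce : continuous e) by (apply (cont_comp (incl I1) N); auto; apply cont_incl; auto).
  assert (Ee : forall b, e (i b) = i b).
  { intros b. unfold e. change (i b, I1) with (Icyl i (b, I1)). rewrite Nc. rewrite hrev_1. unfold Icyl; simpl. apply L0. }
  set (r' := fun a => r (e a)).
  set (K2 := hcat N (fun p => L (Icyl e p))).
  assert (CK2 : continuous K2).
  { apply hcat_cont; auto. apply (cont_comp (Icyl e) L); auto; apply cont_Icyl; auto.
    intros a. unfold Icyl; simpl. rewrite L0. reflexivity. }
  set (Phi := fun p : Cyl (Cyl B) => L (i (fst (fst p)), mkI (phiL (val (snd (fst p))) (val (snd p))))).
  assert (CPhi : continuous Phi).
  { apply (cont_comp (X := Cyl (Cyl B)) (Y := Cyl A) (fun p => (i (fst (fst p)), mkI (phiL (val (snd (fst p))) (val (snd p))))) L); auto.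
    apply (pair_cont (D := Cyl (Cyl B))). apply cyl_filt. apply cont_comp; auto; apply cont_ff.
    apply (icont_lip2 (D := Cyl (Cyl B)) _ _ phiL 2). apply cyl_filt. apply icont_sf. apply icont_snd. apply phiL_lip. }
  destruct (param_HEP P HP2 i CB CA Ci Hi0 A PA K2 Phi CK2 CPhi) as [Psi [CPsi [Ps0 Psc]]].
  { intros b t. unfold K2, Phi, hcat; simpl. unfold repar; simpl.
    destruct Rle_dec as [Hle|Hle].
    - change (i b, mkI (2 * val t + 0)) with (Icyl i (b, mkI (2 * val t + 0))). rewrite Nc.
      rewrite hrev_val. unfold Icyl; simpl. f_equal. f_equal. apply I01_ext.
      solveI t.
    - unfold Icyl; simpl. rewrite Ee. f_equal. f_equal. apply I01_ext. solveI t. }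
  assert (CCA : is_convergence (Cyl A)) by (apply cyl_convergence; auto).
  set (D1 := fun p : Cyl A => Psi (incl I1 p)).
  set (S0 := fun p : Cyl A => Psi ((fst p, I0), snd p)).
  set (S1 := fun p : Cyl A => Psi ((fst p, I1), snd p)).
  assert (CD1 : continuous D1) by (apply (cont_comp (incl I1) Psi); auto; apply cont_incl; auto).
  assert (CS0 : continuous S0) by (apply (cont_comp (X := Cyl A) (Y := Cyl (Cyl A)) _ Psi); auto; apply cont_in2; auto).
  assert (CS1 : continuous S1) by (apply (cont_comp (X := Cyl A) (Y := Cyl (Cyl A)) _ Psi); auto; apply cont_in2; auto).
  assert (PhiB : forall b t s, (val t = 0 \/ val t = 1 \/ val s = 1) -> Phi ((b, t), s) = i b).
  { intros b t s Hts. unfold Phi; simpl. replace (mkI (phiL (val t) (val s))) with I1. rewrite L1, Er; auto.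
    apply I01_ext. pose proof (val_bnd s). destruct Hts as [Ht|[Ht|Ht]]; rewrite ?Ht; solveI t. }
  assert (B0 : forall b s, S0 (i b, s) = i b).
  { intros b s. unfold S0; simpl. rewrite Psc. apply PhiB. left; reflexivity. }
  assert (B1 : forall b s, S1 (i b, s) = i b).
  { intros b s. unfold S1; simpl. rewrite Psc. apply PhiB. right; left; reflexivity. }
  assert (BD : forall b t, D1 (i b, t) = i b).
  { intros b t. unfold D1, incl. rewrite Psc. apply PhiB. right; right; reflexivity. }
  exists r', (hcat (hcat S0 D1) (hrev S1)). split; [apply (cont_comp e r); auto|split; [|split; [|split; [|split]]]].
  - intros b. unfold r'. change (r (e (i b)) = b). rewrite Ee. apply Er.
  - apply hcat_cont; auto. apply hcat_cont; auto. apply hrev_cont; auto.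
    intros a. rewrite hcat_1, hrev_0. reflexivity.
  - intros a. rewrite !hcat_0. unfold S0; simpl. rewrite Ps0. unfold K2. rewrite hcat_0. apply N0.
  - intros a. rewrite hcat_1, hrev_1. unfold S1; simpl. rewrite Ps0. unfold K2. rewrite hcat_1.
    unfold Icyl; simpl. rewrite L1. reflexivity.
  - intros b. apply hcat_const. apply hcat_const; auto. intros t; rewrite hrev_val; auto.
Qed.
End Abstract2.

Lemma lip_mul (c d : R) : 0 <= c -> lip2 (fun a b => a * (c + b) + d) (c + 1 + 1).
Proof.
  intros Hc. split; [lra|]. intros a b a' b' Ha Hb Ha' Hb'.
  replace (a' * (c + b') + d - (a * (c + b) + d)) with ((a' - a) * (c + b') + a * (b' - b)) by ring.
  eapply Rle_trans; [apply Rabs_triang|]. rewrite !Rabs_mult.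
  rewrite (Rabs_right (c + b')) by lra. rewrite (Rabs_right a) by lra.
  pose proof (Rabs_pos (a' - a)); pose proof (Rabs_pos (b' - b)). nra.
Qed.

Section Abstract3.
Variable P : ConvSpace -> Prop.
Hypothesis HP1 : forall X, P X -> is_Lim X.
Hypothesis HP2 : forall (B A Y : ConvSpace) (i : B -> A) (f : B -> Y),
  is_convergence A -> is_convergence Y -> continuous i -> continuous f ->
  exists (Q : ConvSpace) (fbar : A -> Q) (ibar : Y -> Q), GP P i f fbar ibar.

Lemma pushout_we_ibar {B A Y Q : ConvSpace} (i : B -> A) (f : B -> Y) (fbar : A -> Q) (ibar : Y -> Q) :
  P B -> P A -> P Y -> continuous f -> GP P i f fbar ibar -> cof P i -> we i -> we ibar.
Proof.
  intros PB PA PY Cf [[PQ [Cfb [Cib [Ecomm UP]]]] [Surj CD]] Hc Hw.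
  destruct (sdr P HP1 HP2 i PB PA Hc Hw) as [r [Dh [Cr [Er [CDh [D0 [D1 DB]]]]]]].
  destruct (UP Y PY (fun a => f (r a)) (fun y => y) (cont_comp _ _ Cr Cf) cont_id) as [rb [Crb [Rb1 [Rb2 _]]]].
  { intros b. rewrite Er; auto. }
  destruct (CD Q PQ (fun p => fbar (Dh p)) (fun p => ibar (fst p)) (cont_comp _ _ CDh Cfb)
     (cont_comp (X := Cyl Y) fst ibar (cont_fst Y) Cib)) as [H [CH [H1 H2]]].
  { intros b t. simpl. rewrite DB. apply Ecomm. }
  split; auto. exists rb. split; auto. split.
  - apply hsym. exists H. split; auto. split; intros q; unfold incl; destruct (Surj q) as [[a ->]|[y ->]].
    + rewrite H1, D0; auto.
    + rewrite H2; auto.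
    + rewrite H1, D1, Rb1. rewrite Ecomm. reflexivity.
    + rewrite H2, Rb2; auto.
  - eapply heq. apply (hrefl (fun y : Y => y)); [apply (PC P HP1); auto|apply cont_id]. intros y; rewrite Rb2; auto. auto.
Qed.

Lemma mapcyl {X Y : ConvSpace} (f : X -> Y) : P X -> P Y -> continuous f ->
  exists (Z : ConvSpace) (ka : Cyl X -> Z) (s : Y -> Z) (p : Z -> Y) (Hs : Cyl Z -> Z),
    GP P (incl I0) f ka s /\ continuous p /\ (forall x t, p (ka (x, t)) = f x) /\ (forall y, p (s y) = y) /\
    continuous Hs /\ (forall z, Hs (z, I0) = s (p z)) /\ (forall z, Hs (z, I1) = z) /\
    (forall x t, Hs (ka (x, I1), t) = ka (x, t)) /\ cof P (fun x => ka (x, I1)).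
Proof.
  intros PX PY Cf. pose proof (PC P HP1 PX) as CX. pose proof (PC P HP1 PY) as CY.
  pose proof (cyl_convergence X CX) as CCX.
  destruct (HP2 X (Cyl X) Y (incl I0) f CCX CY (cont_incl X I0 CX) Cf) as [Z [ka [s GPZ]]].
  pose proof GPZ as [[PZ [Cka [Cs [Ecomm UP]]]] [Surj CD]].
  pose proof (PC P HP1 PZ) as CZ.
  destruct (UP Y PY (fun p => f (fst p)) (fun y => y) (cont_comp (X := Cyl X) fst f (cont_fst X) Cf) cont_id) as [p [Cp [Pk [Ps _]]]].
  { intros x; reflexivity. }
  destruct (CD Z PZ (fun q => ka (fst (fst q), mkI ((fun a b => a * (0 + b) + 0) (val (snd (fst q))) (val (snd q)))))
     (fun q => s (fst q))) as [Hs [CHs [Hs1 Hs2]]].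
  { apply (cont_comp (X := Cyl (Cyl X)) (Y := Cyl X) _ ka); auto.
    apply (pair_cont (D := Cyl (Cyl X))). apply cyl_filt. apply cont_ff.
    apply (icont_lip2 (D := Cyl (Cyl X)) (fun p => snd (fst p)) snd (fun a b => a * (0 + b) + 0) (0+1+1)). apply cyl_filt. apply icont_sf. apply icont_snd. apply lip_mul; lra. }
  { apply (cont_comp (X := Cyl Y) fst s); auto; apply cont_fst. }
  { intros x t. simpl. replace (mkI (0 * (0 + val t) + 0)) with I0. apply Ecomm.
    apply I01_ext. rewrite mkI_val; [unfold val; simpl; ring|lra]. }
  exists Z, ka, s, p, Hs. split; auto. split; auto. split; [intros; apply Pk|]. split; auto.
  split; auto. split; [|split; [|split]].
  - intros z. destruct (Surj z) as [[[x t] ->]|[y ->]].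
    + rewrite Hs1; simpl. rewrite Pk. rewrite <- Ecomm. unfold incl. f_equal. f_equal.
      apply I01_ext. rewrite mkI_val; [unfold val; simpl; ring|lra].
    + rewrite Hs2, Ps. reflexivity.
  - intros z. destruct (Surj z) as [[[x t] ->]|[y ->]].
    + rewrite Hs1; simpl. f_equal. f_equal. apply I01_ext. pose proof (val_bnd t).
      rewrite mkI_val; [unfold val; simpl; ring|unfold val in *; simpl; nra].
    + rewrite Hs2. reflexivity.
  - intros x t. rewrite Hs1; simpl. f_equal. f_equal. apply I01_ext. pose proof (val_bnd t).
    rewrite mkI_val; [unfold val; simpl; ring|unfold val in *; simpl; nra].
  -
    assert (H0 : HEP_at P I0 (fun x => ka (x, I1))).
    { intros W PW F G CF CG E.
      set (psi := fun q : Cyl (Cyl X) => (fun a b => a * (1 + b) + 0) (val (snd (fst q))) (val (snd q))).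
      assert (Rpsi : rcont psi).
      { apply (rcont_lip2 (D := Cyl (Cyl X)) (fun p => snd (fst p)) snd (fun a b => a * (1 + b) + 0) (1+1+1)). apply cyl_filt. apply icont_sf. apply icont_snd. apply lip_mul; lra. }
      set (H1 := fun q : Cyl (Cyl X) => if Rle_dec (psi q) 1 then F (ka (fst (fst q), mkI (psi q)))
                 else G (fst (fst q), mkI ((fun a b => a * (1 + b) + -1) (val (snd (fst q))) (val (snd q))))).
      assert (CH1 : continuous H1).
      { apply glue. apply cyl_filt. apply cyl_upw; auto. apply HP1; auto. auto.
        - apply (cont_comp (X := Cyl (Cyl X)) (Y := Z) _ F); auto.
          apply (cont_comp (X := Cyl (Cyl X)) (Y := Cyl X) _ ka); auto.
          apply (pair_cont (D := Cyl (Cyl X))). apply cyl_filt. apply cont_ff. apply icont_mkI; auto. apply cyl_filt.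
        - apply (cont_comp (X := Cyl (Cyl X)) (Y := Cyl X) _ G); auto.
          apply (pair_cont (D := Cyl (Cyl X))). apply cyl_filt. apply cont_ff.
          apply (icont_lip2 (D := Cyl (Cyl X)) (fun p => snd (fst p)) snd (fun a b => a * (1 + b) + -1) (1+1+1)). apply cyl_filt. apply icont_sf. apply icont_snd. apply lip_mul; lra.
        - intros q Hq. rewrite Hq. unfold psi in Hq; cbv beta in Hq.
          replace (mkI 1) with I1 by (apply I01_ext; rewrite mkI_val; rewrite ?I1_val; lra).
          replace (mkI (val (snd (fst q)) * (1 + val (snd q)) + -1)) with I0 by (apply I01_ext; rewrite mkI_val; rewrite ?I0_val; lra).
          apply E. }
      destruct (CD W PW H1 (fun q => F (s (fst q))) CH1) as [H [CH [EH1 EH2]]].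
      { apply (cont_comp (X := Cyl Y) fst (fun y => F (s y))); [apply cont_fst|apply cont_comp; auto]. }
      { intros x t. unfold H1, psi; simpl. destruct Rle_dec as [r|r]; [|unfold val in r; simpl in r; lra].
        rewrite <- Ecomm. unfold incl. f_equal. f_equal. f_equal. apply I01_ext. rewrite mkI_val; unfold val; simpl; lra. }
      exists H. split; auto. split.
      - intros z. destruct (Surj z) as [[[x t] ->]|[y ->]].
        + unfold incl. rewrite EH1. unfold H1, psi; simpl. pose proof (val_bnd t).
          destruct Rle_dec as [r|r]; [|unfold val in *; simpl in *; lra].
          f_equal. f_equal. f_equal. apply I01_ext. rewrite mkI_val; unfold val in *; simpl in *; lra.
        + unfold incl. rewrite EH2. reflexivity.
      - intros [x u]. unfold Icyl; simpl. rewrite EH1. unfold H1, psi; simpl. pose proof (val_bnd u).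
        destruct Rle_dec as [r|r].
        + assert (Hu : u = I0) by (apply I01_ext; unfold val in *; simpl in *; lra). subst u.
          replace (mkI (1 * (1 + val I0) + 0)) with I1. apply E.
          apply I01_ext. rewrite mkI_val; unfold val; simpl; lra.
        + f_equal. f_equal. apply I01_ext. rewrite mkI_val; unfold val in *; simpl in *; lra. }
    split; [apply (cont_comp (incl I1) ka); auto; apply cont_incl; auto|].
    split; auto. apply HEP_01; auto.
Qed.
End Abstract3.

Section Abstract4.
Variable P : ConvSpace -> Prop.
Hypothesis HP1 : forall X, P X -> is_Lim X.
Hypothesis HP2 : forall (B A Y : ConvSpace) (i : B -> A) (f : B -> Y),
  is_convergence A -> is_convergence Y -> continuous i -> continuous f ->
  exists (Q : ConvSpace) (fbar : A -> Q) (ibar : Y -> Q), GP P i f fbar ibar.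

Lemma pushout_we_fbar {B A Y Q : ConvSpace} (i : B -> A) (f : B -> Y) (fbar : A -> Q) (ibar : Y -> Q) :
  P B -> P A -> P Y -> continuous f -> GP P i f fbar ibar -> cof P i -> we f -> we fbar.
Proof.
  intros PB PA PY Cf [[PQ [Cfb [Cib [Ecomm UP]]]] [Surj CD]] Hc Hw.
  pose proof (PC P HP1 PB) as CB. pose proof (PC P HP1 PA) as CA. pose proof (PC P HP1 PY) as CY.
  destruct Hc as [Ci [Hi0 Hi1]].
  destruct (mapcyl P HP1 HP2 f PB PY Cf) as [Z [ka [s [p [Hs [GPZ [Cp [Pk [Ps [CHs [Hs0 [Hs1 [HsJ Hj]]]]]]]]]]]]].
  pose proof GPZ as [[PZ [Cka [Cs [EcZ UPZ]]]] [SurjZ CDZ]].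
  pose proof (PC P HP1 PZ) as CZ.
  set (j := fun b => ka (b, I1)).
  assert (Cj : continuous j) by apply Hj.
  assert (Wp : we p).
  { split; auto. exists s. split; auto. split.
    - eapply heq. apply (hrefl (fun y : Y => y)); [auto|apply cont_id]. intros y; rewrite Ps; auto. auto.
    - exists Hs. split; auto. }
  assert (Wj : we j).
  { apply (we_2b B Z Y (HP1 Z PZ) j p Cj Cp Wp).
    eapply we_ext; [exact Hw|]. intros b. unfold j. rewrite Pk. reflexivity. }
  destruct (HP2 B Z A j i CZ CA Cj Ci) as [P1 [jb [io GP1]]].
  pose proof GP1 as [[PP1 [Cjb [Cio [Ec1 UP1]]]] [Surj1 CD1]].
  pose proof (PC P HP1 PP1) as CP1.
  assert (Wio : we io) by (eapply (pushout_we_ibar P HP1 HP2 j i); eauto).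
  destruct (UP1 Q PQ (fun z => ibar (p z)) fbar (cont_comp _ _ Cp Cib) Cfb) as [c [Cc [Ec2' [Ec1' _]]]].
  { intros b. unfold j. rewrite Pk. simpl. symmetry; apply Ecomm. }
  destruct (Hi0 P1 PP1 io (hrev (fun q => jb (ka q))) Cio (hrev_cont _ (cont_comp _ _ Cka Cjb))) as [E [CE [E0 Ei]]].
  { intros b. unfold incl. rewrite hrev_0. symmetry; apply Ec1. }
  unfold incl in E0.
  destruct (UP P1 PP1 (fun a => E (a, I1)) (fun y => jb (s y))
     (cont_comp (incl I1) E (cont_incl A I1 CA) CE) (cont_comp _ _ Cs Cjb)) as [q [Cq [Q1 [Q2 _]]]].
  { intros b. change (i b, I1) with (Icyl i (b, I1)). rewrite Ei. rewrite hrev_1. simpl. rewrite <- EcZ. reflexivity. }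
  assert (Wc : we c).
  { split; auto. exists q. split; auto. split.
    -
      destruct (CD Q PQ (fun p0 => c (hrev E p0)) (fun p0 => ibar (fst p0)) (cont_comp _ _ (hrev_cont _ CE) Cc)
          (cont_comp (X := Cyl Y) fst ibar (cont_fst Y) Cib)) as [H [CH [H1 H2]]].
      { intros b t. rewrite hrev_val. change (i b, mkI (1 - val t)) with (Icyl i (b, mkI (1 - val t))). rewrite Ei.
        rewrite hrev_val. rewrite Ec2'. simpl. rewrite Pk. reflexivity. }
      exists H. split; auto. split; intros x; unfold incl; destruct (Surj x) as [[a ->]|[y ->]].
      + rewrite H1, hrev_0, Q1. reflexivity.
      + rewrite H2, Q2, Ec2', Ps. reflexivity.
      + rewrite H1, hrev_1, E0, Ec1'. reflexivity.
      + rewrite H2. reflexivity.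
    -
      destruct (CD1 P1 PP1 (fun p0 => jb (Hs p0)) (hrev E) (cont_comp _ _ CHs Cjb) (hrev_cont _ CE)) as [H [CH [H1 H2]]].
      { intros b t. unfold j. rewrite HsJ. rewrite hrev_val. change (i b, mkI (1 - val t)) with (Icyl i (b, mkI (1 - val t))).
        rewrite Ei. rewrite hrev_rev. reflexivity. }
      exists H. split; auto. split; intros x; unfold incl; destruct (Surj1 x) as [[z ->]|[a ->]].
      + rewrite H1, Hs0, Ec2', Q2. reflexivity.
      + rewrite H2, hrev_0, Ec1', Q1. reflexivity.
      + rewrite H1, Hs1. reflexivity.
      + rewrite H2, hrev_1, E0. reflexivity. }
  eapply we_ext; [apply (we_comp A P1 Q (HP1 A PA) (HP1 Q PQ) io c Cio Cc Wio Wc)|].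
  intros a; apply Ec1'.
Qed.

Lemma po_iso {B A Y Q Q' : ConvSpace} (i : B -> A) (f : B -> Y) (fbar : A -> Q) (ibar : Y -> Q)
  (fb' : A -> Q') (ib' : Y -> Q') :
  is_pushout P i f fbar ibar -> is_pushout P i f fb' ib' ->
  exists phi : Q' -> Q, is_iso phi /\ (forall a, phi (fb' a) = fbar a) /\ (forall y, phi (ib' y) = ibar y).
Proof.
  intros [PQ [Cfb [Cib [Ec UP]]]] [PQ' [Cfb' [Cib' [Ec' UP']]]].
  destruct (UP' Q PQ fbar ibar Cfb Cib Ec) as [phi [Cphi [F1 [F2 _]]]].
  destruct (UP Q' PQ' fb' ib' Cfb' Cib' Ec') as [psi [Cpsi [G1 [G2 _]]]].
  destruct (UP' Q' PQ' fb' ib' Cfb' Cib' Ec') as [h [Ch [_ [_ U1]]]].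
  destruct (UP Q PQ fbar ibar Cfb Cib Ec) as [h2 [Ch2 [_ [_ U2]]]].
  exists phi. split; [split; auto; exists psi; split; auto; split|split; auto].
  - intros x.
    assert (A1 : forall x, psi (phi x) = h x).
    { apply (U1 (fun x => psi (phi x))); [apply cont_comp; auto|intros a; rewrite F1, G1; auto|intros y; rewrite F2, G2; auto]. }
    assert (A2 : forall x, x = h x) by (apply (U1 (fun x => x)); [apply cont_id|auto|auto]).
    rewrite A1, <- A2; auto.
  - intros x.
    assert (A1 : forall x, phi (psi x) = h2 x).
    { apply (U2 (fun x => phi (psi x))); [apply cont_comp; auto|intros a; rewrite G1, F1; auto|intros y; rewrite G2, F2; auto]. }
    assert (A2 : forall x, x = h2 x) by (apply (U2 (fun x => x)); [apply cont_id|auto|auto]).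
    rewrite A1, <- A2; auto.
Qed.

Lemma fibrant_all (X : ConvSpace) : P X -> fibrant P X.
Proof.
  intros PX Q PQ k [Ck [Hk0 _]] [_ [g [Cg [_ [K [CK [K0 K1]]]]]]].
  destruct (Hk0 X PX g K Cg CK (fun x => eq_sym (K0 x))) as [H [CH [H0 Hc]]].
  exists (fun q => H (q, I1)). split.
  - apply (cont_comp (incl I1) H); auto. apply cont_incl, (PC P HP1 PQ).
  - intros x. change (k x, I1) with (Icyl k (x, I1)). rewrite Hc. apply K1.
Qed.

Theorem abstract_main : cofibration_category P.
Proof.
  split; [|split; [|split; [|split; [|split]]]].
  - intros X Y PX PY f Hf. split; [apply cof_iso; auto|apply we_iso; auto; apply (PC P HP1); auto].
  - intros X Y Z PX PY PZ f g Cf Cg. split; [|split].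
    + apply we_comp; auto.
    + apply we_2a; auto.
    + apply we_2b; auto.
  - intros X Y Z PX PY PZ f g; apply cof_comp.
  - intros B A Y PB PA PY i f Hi Cf. split.
    + destruct (HP2 B A Y i f (PC P HP1 PA) (PC P HP1 PY) (proj1 Hi) Cf) as [Q [fb [ib GPQ]]].
      exists Q, fb, ib. apply GPQ.
    + intros Q fbar ibar HPO.
      destruct (HP2 B A Y i f (PC P HP1 PA) (PC P HP1 PY) (proj1 Hi) Cf) as [Q' [fb' [ib' GPQ]]].
      destruct (po_iso i f fbar ibar fb' ib' HPO (proj1 GPQ)) as [phi [Iphi [Ph1 Ph2]]].
      pose proof (proj1 (proj1 GPQ)) as PQ'. pose proof (proj1 HPO) as PQ.
      assert (Wphi : we phi) by (apply we_iso; auto; apply (PC P HP1); auto).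
      split; [|split].
      * eapply cof_ext; [apply (cof_comp P ib' phi); [eapply pushout_cof; eauto|apply cof_iso; auto]|exact Ph2].
      * intros Wf. pose proof (proj1 (proj2 (proj1 GPQ))) as Cfb'.
        assert (W1 : we fb') by exact (pushout_we_fbar i f fb' ib' PB PA PY Cf GPQ Hi Wf).
        eapply we_ext; [apply (we_comp A Q' Q (HP1 A PA) (HP1 Q PQ) fb' phi Cfb' (proj1 Iphi) W1 Wphi)|exact Ph1].
      * intros Wi. pose proof (proj1 (proj2 (proj2 (proj1 GPQ)))) as Cib'.
        assert (W1 : we ib') by exact (pushout_we_ibar P HP1 HP2 i f fb' ib' PB PA PY Cf GPQ Hi Wi).
        eapply we_ext; [apply (we_comp Y Q' Q (HP1 Y PY) (HP1 Q PQ) ib' phi Cib' (proj1 Iphi) W1 Wphi)|exact Ph2].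
  - intros X Y PX PY f Cf.
    destruct (mapcyl P HP1 HP2 f PX PY Cf) as [Z [ka [s [p [Hs [GPZ [Cp [Pk [Ps [CHs [Hs0 [Hs1 [HsJ Hj]]]]]]]]]]]]].
    exists Z, (fun x => ka (x, I1)), p. split; [apply GPZ|split; auto; split].
    + split; auto. exists s. split; [apply GPZ|split].
      * eapply heq. apply (hrefl (fun y : Y => y)); [apply (PC P HP1 PY)|apply cont_id]. intros y; rewrite Ps; auto. auto.
      * exists Hs. split; auto.
    + intros x. apply Pk.
  - intros X PX. exists X, (fun x => x). split; auto.
    assert (Iid : is_iso (fun x : X => x)) by (split; [apply cont_id|exists (fun x => x); split; [apply cont_id|split; auto]]).
    split; [apply cof_iso; auto|split; [apply we_iso; auto; apply (PC P HP1); auto|apply fibrant_all; auto]].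
Qed.
End Abstract4.

Theorem mainTheorem4 : cofibration_category is_PsTop /\ cofibration_category is_Lim.
Proof.
  split.
  - apply abstract_main. apply PsTop_Lim.
    intros B A Y i f HA HY Ci Cf. apply pushout_PsTop; auto.
  - apply abstract_main. auto.
    intros B A Y i f HA HY Ci Cf. apply pushout_Lim; auto.
Qed.
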